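(* Let $F$ be a field of characteristic $0$ and $k$ a positive integer. Then each of the following graded polynomials is a $\mathbb{Z}$-graded identity of $E^k$ (so the $T_{\mathbb{Z}}$-ideal $P^k$ they generate satisfies $P^k\subseteq T_{\mathbb{Z}}(E^k)$): (1) $x$ whenever $\alpha(x)<0$; (2) $[x_1,x_2,x_3]$ for every choice of the degrees; (3) if $k$ is even: $[y_1,y_2]\cdots[y_{k-1},y_k][y_{k+1},x]$ with $x$ of arbitrary degree; (4) if $k$ is odd: $[y_1,y_2]\cdots[y_{k-2},y_{k-1}][y_k,y_{k+1}]$; (5) for even $l\le k$: $g_{k-l+2}(z_1,\dots,z_{k-l+2})[u_1,u_2]\cdots[u_{l-1},u_l]$; (6) for odd $l\le k$: $[g_{k-l+2}(z_1,\dots,z_{k-l+2}),u_1][u_2,u_3]\cdots[u_{l-1},u_l]$; (7) for odd $l\le k$: $g_{k-l+2}(z_1,\dots,z_{k-l+2})[z_{k-l+3},u_1][u_2,u_3]\cdots[u_{l-1},u_l]$; where in (5)–(7) all $z_i$ have positive odd degree and all $u_i$ have even degree (each $u_i$ being either a degree-$0$ variable $y$ or a variable $z$ of positive even degree).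
   Context: $L$ is a vector space over $F$ with basis $e_1,e_2,\dots$, $E$ its unital Grassmann algebra (basis $1$ and $e_{i_1}\cdots e_{i_k}$, $i_1<\cdots<i_k$, with $e_ie_j=-e_je_i$). $E^k$ is $E$ with the $\mathbb{Z}$-grading induced by $\|e_i\|=0$ for $1\le i\le k$ and $\|e_i\|=1$ for $i\ge k+1$ (basis monomials get the sum of degrees of their factors; $1$ has degree $0$). Graded polynomials live in the free unital associative algebra on countably many variables of each integer degree, $\alpha(x)$ denoting the degree; the letters $y,y_i$ denote variables of degree $0$. A polynomial is a graded identity of a $\mathbb{Z}$-graded algebra $A$ if it vanishes under every substitution of each variable $x$ by an element of $A_{\alpha(x)}$. $[a,b]=ab-ba$, $[a,b,c]=[[a,b],c]$. Define $g_1(z_1)=z_1$ and, for $m\ge2$, $g_m(z_1,\dots,z_m)=\sum_T(-2)^{-|T|/2}f_T$, the sum over all subsets $T\subseteq\{1,\dots,m\}$ with $|T|$ even, where for $T=\{j_1<\cdots<j_t\}$ and $\{1,\dots,m\}\setminus T=\{i_1<\cdots<i_r\}$ one sets $f_T=z_{i_1}\cdots z_{i_r}[z_{j_1},z_{j_2}]\cdots[z_{j_{t-1}},z_{j_t}]$. *)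

(* Defs.v *)
From mathcomp Require Import all_boot all_order all_algebra.
Set Implicit Arguments. Unset Strict Implicit. Unset Printing Implicit Defensive.
Import Order.TTheory GRing.Theory Num.Theory.
Local Open Scope ring_scope.

(* Concrete model of the unital Grassmann algebra E over F on generators
   e_1, e_2, ...  The generator e_(i+1) is encoded by the natural number i.
   An element of E is presented as a finite formal linear combination of
   words in the generators: a list of (coefficient, word).  Two presentations
   denote the same element of E iff they have the same coordinates
   [Ecoef] on the standard basis 1, e_{i_1}...e_{i_r} (i_1<...<i_r), the
   basis monomial being encoded by the strictly increasing list of indices.
   A word w evaluates in E to 0 if it has a repeated letter, and otherwise to
   (-1)^(number of inversions of w) times the basis monomial [sort w]. *)

Section Grassmann.
Variable F : fieldType.

Definition Eexpr := seq (F * seq nat).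

Fixpoint inversions (w : seq nat) : nat :=
  if w is x :: s then (count (fun y => y < x)%N s + inversions s)%N else 0%N.

Definition wsign (w : seq nat) : F :=
  if uniq w then (-1) ^+ inversions w else 0.

Definition Ecoef (a : Eexpr) (s : seq nat) : F :=
  \sum_(p <- a) p.1 * wsign p.2 * (sort leq p.2 == s)%:R.

Definition Ezero (a : Eexpr) : Prop := forall s, Ecoef a s = 0.

Definition Eone : Eexpr := [:: (1, [::])].
Definition Eadd (a b : Eexpr) : Eexpr := a ++ b.
Definition Escale (c : F) (a : Eexpr) : Eexpr := [seq (c * p.1, p.2) | p <- a].
Definition Esub (a b : Eexpr) : Eexpr := a ++ Escale (-1) b.
Definition Emul (a b : Eexpr) : Eexpr :=
  [seq (p.1 * q.1, p.2 ++ q.2) | p <- a, q <- b].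
Definition Eprod (l : seq Eexpr) : Eexpr := foldr Emul Eone l.
Definition Esum (l : seq Eexpr) : Eexpr := flatten l.

Definition Ecomm (a b : Eexpr) : Eexpr := Esub (Emul a b) (Emul b a).

(* Z-grading of E^k: ||e_i|| = 0 for 1 <= i <= k (indices 0..k-1 here),
   ||e_i|| = 1 for i >= k+1 (indices >= k here). *)
Definition mdeg (k : nat) (s : seq nat) : nat := count (fun i => k <= i)%N s.

Definition Ehomog (k : nat) (d : int) (a : Eexpr) : Prop :=
  forall s, Ecoef a s != 0 -> (mdeg k s)%:Z = d.

Definition comm_prod (v : nat -> Eexpr) (n : nat) : Eexpr :=
  Eprod [seq Ecomm (v (2 * i)%N) (v (2 * i).+1) | i <- iota 0 n].

Fixpoint pairup (s : seq nat) : seq (nat * nat) :=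
  match s with
  | x :: y :: t => (x, y) :: pairup t
  | _ => [::]
  end.

(* f_T(z_1..z_m) with z_(i+1) encoded as z i, T a subset of {0..m-1} *)
Definition fT (m : nat) (T : {set 'I_m}) (z : nat -> Eexpr) : Eexpr :=
  let Tl := [seq val i | i <- enum 'I_m & i \in T] in
  let Rl := [seq val i | i <- enum 'I_m & i \notin T] in
  Emul (Eprod [seq z i | i <- Rl])
       (Eprod [seq Ecomm (z p.1) (z p.2) | p <- pairup Tl]).

Definition gpoly (m : nat) (z : nat -> Eexpr) : Eexpr :=
  if m == 1%N then z 0%N else
  Esum [seq Escale (((-2 : F) ^+ (#|T| %/ 2))^-1) (fT T z)
       | T : {set 'I_m} <- enum [set: {set 'I_m}] & ~~ odd #|T|].

End Grassmann.

(* Main.v *)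
Require Import Defs.
From mathcomp Require Import all_boot all_order all_algebra.
From mathcomp Require Import zify ring.
Set Implicit Arguments. Unset Strict Implicit. Unset Printing Implicit Defensive.
Import Order.TTheory GRing.Theory Num.Theory.
Local Open Scope ring_scope.

Definition cross (p q : seq nat) : nat := (\sum_(x <- p) count (fun y => y < x) q)%N.

Lemma inversions_cat p q :
  inversions (p ++ q) = (inversions p + inversions q + cross p q)%N.
Proof.
elim: p => [|x p IH] /=; first by rewrite /cross big_nil addn0.
rewrite IH /cross big_cons count_cat; lia.
Qed.

Lemma inversions_sorted s : sorted leq s -> inversions s = 0%N.
Proof.
elim: s => [|x s IH] //= Hs.
have Hp := Hs.
rewrite (IH (path_sorted Hs)) addn0.
apply/eqP; rewrite -leqn0 leqNgt -has_count; apply/hasPn => y Hy.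
rewrite -leqNgt.
have := order_path_min leq_trans Hp.
by move/allP/(_ y Hy).
Qed.

Lemma cross_perm_l p p' q : perm_eq p p' -> cross p q = cross p' q.
Proof. by move=> H; rewrite /cross (perm_big _ H). Qed.

Lemma cross_perm_r p q q' : perm_eq q q' -> cross p q = cross p q'.
Proof. by move=> /permP H; rewrite /cross; apply: eq_bigr => x _; rewrite H. Qed.

Lemma count_ltgt x q : x \notin q ->
  (count (fun y => y < x) q + count (fun y => x < y) q)%N = size q.
Proof.
elim: q => [|y q IH] //=; rewrite inE negb_or => /andP [Hxy Hq].
rewrite -(IH Hq); move: Hxy; case: (ltngtP y x) => //= _ _; lia.
Qed.

Lemma cross_sym p q : uniq (p ++ q) -> (cross p q + cross q p = size p * size q)%N.
Proof.
elim: p => [|x p IH] /=; first by rewrite /cross big_nil big1.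
rewrite mem_cat negb_or => /andP [/andP [_ Hxq] Hu].
have E : cross q (x :: p) = (count (fun y => x < y) q + cross q p)%N.
  rewrite /cross; elim: q {Hxq Hu IH} => [|y q IHq]; first by rewrite !big_nil.
  by rewrite !big_cons /= IHq; lia.
rewrite E /cross big_cons -/(cross p q) -/(cross q p) mulSn.
have H1 := count_ltgt Hxq; have H2 := IH Hu.
by rewrite addnACA H1 H2.
Qed.

Lemma perm_sort_l (p : seq nat) : perm_eq (sort leq p) p.
Proof. by rewrite perm_sort. Qed.

Lemma sort_cat_l (p q : seq nat) : sort leq (p ++ q) = sort leq (sort leq p ++ q).
Proof.
apply/perm_sortP; [exact: leq_total|exact: leq_trans|exact: anti_leq|].
by rewrite perm_cat2r perm_sym perm_sort_l.
Qed.

Lemma sort_cat_r (p q : seq nat) : sort leq (p ++ q) = sort leq (p ++ sort leq q).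
Proof.
apply/perm_sortP; [exact: leq_total|exact: leq_trans|exact: anti_leq|].
by rewrite perm_cat2l perm_sym perm_sort_l.
Qed.

Lemma sort_catC (p q : seq nat) : sort leq (q ++ p) = sort leq (p ++ q).
Proof.
apply/perm_sortP; [exact: leq_total|exact: leq_trans|exact: anti_leq|].
by rewrite perm_catC.
Qed.

Lemma inversions_sort p : inversions (sort leq p) = 0%N.
Proof. by apply: inversions_sorted; apply: sort_sorted; exact: leq_total. Qed.

Section W.
Variable F : fieldType.

Lemma wsign_cat_l (p q : seq nat) :
  wsign F (p ++ q) = wsign F p * wsign F (sort leq p ++ q).
Proof.
rewrite /wsign.
have -> : uniq (sort leq p ++ q) = uniq (p ++ q).
  by apply: perm_uniq; rewrite perm_cat2r perm_sort_l.
case Hu: (uniq (p ++ q)); last by rewrite mulr0.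
have Hp : uniq p by move: Hu; rewrite cat_uniq => /andP [].
rewrite Hp !inversions_cat inversions_sort add0n (cross_perm_l _ (perm_sort_l p)).
by rewrite -exprD addnA.
Qed.

Lemma wsign_cat_r (p q : seq nat) :
  wsign F (p ++ q) = wsign F q * wsign F (p ++ sort leq q).
Proof.
rewrite /wsign.
have -> : uniq (p ++ sort leq q) = uniq (p ++ q).
  by apply: perm_uniq; rewrite perm_cat2l perm_sort_l.
case Hu: (uniq (p ++ q)); last by rewrite mulr0.
have Hq : uniq q by move: Hu; rewrite cat_uniq => /and3P [].
rewrite Hq !inversions_cat inversions_sort addn0 (cross_perm_r _ (perm_sort_l q)).
by rewrite -exprD; congr (_ ^+ _); lia.
Qed.

Lemma wsign_catC (p q : seq nat) :
  wsign F (q ++ p) = (-1) ^+ (size p * size q) * wsign F (p ++ q).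
Proof.
rewrite /wsign uniq_catC.
case Hu: (uniq (p ++ q)); last by rewrite mulr0.
rewrite !inversions_cat -exprD -(cross_sym Hu).
rewrite -signr_odd -[in RHS]signr_odd; congr (_ ^+ _).
rewrite !oddD; by case: (odd (inversions p)); case: (odd (inversions q));
  case: (odd (cross p q)); case: (odd (cross q p)).
Qed.

Lemma wsign_sort (w : seq nat) : wsign F (sort leq w) = (uniq w)%:R.
Proof. by rewrite /wsign sort_uniq inversions_sort expr0; case: (uniq w). Qed.

End W.

Section E.
Variable F : fieldType.
Implicit Types a b c : Eexpr F.

Lemma Ecoef_cat a b s : Ecoef (a ++ b) s = Ecoef a s + Ecoef b s.
Proof. by rewrite /Ecoef big_cat. Qed.

Lemma Ecoef_nil s : Ecoef ([::] : Eexpr F) s = 0.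
Proof. by rewrite /Ecoef big_nil. Qed.

Lemma Ecoef_scale (x : F) a s : Ecoef (Escale x a) s = x * Ecoef a s.
Proof.
rewrite /Ecoef /Escale big_map big_distrr; apply: eq_bigr => p _ /=.
by rewrite !mulrA.
Qed.

Lemma Ecoef_sub a b s : Ecoef (Esub a b) s = Ecoef a s - Ecoef b s.
Proof. by rewrite /Esub Ecoef_cat Ecoef_scale mulN1r. Qed.

Lemma Ecoef_mul a b s : Ecoef (Emul a b) s =
  \sum_(p <- a) \sum_(q <- b)
     p.1 * q.1 * wsign F (p.2 ++ q.2) * (sort leq (p.2 ++ q.2) == s)%:R.
Proof. by rewrite /Ecoef /Emul big_allpairs_dep. Qed.

Lemma Ecoef_comm a b s : Ecoef (Ecomm a b) s = Ecoef (Emul a b) s - Ecoef (Emul b a) s.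
Proof. by rewrite /Ecomm Ecoef_sub. Qed.

Lemma Ecoef_sum (L : seq (Eexpr F)) s : Ecoef (Esum L) s = \sum_(x <- L) Ecoef x s.
Proof. by rewrite /Ecoef /Esum big_flatten. Qed.

Lemma sum_pick (X : seq (seq nat)) (u : seq nat) (Phi : seq nat -> F) :
  uniq X -> u \in X -> \sum_(t <- X) (u == t)%:R * Phi t = Phi u.
Proof.
elim: X => [|t X IH] //= /andP [HtX HX]; rewrite inE big_cons.
case: (eqVneq u t) => [Eut _|Hne /= HuX].
  rewrite Eut mul1r big1_seq ?addr0 // => t' /andP [_ Ht'].
  case: (eqVneq t t') => [E|_]; last by rewrite mul0r.
  by move: HtX; rewrite E Ht'.
by rewrite mul0r add0r IH.
Qed.

Lemma lemX a (Phi : seq nat -> F) (X : seq (seq nat)) :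
  uniq X -> (forall p, p \in a -> sort leq p.2 \in X) ->
  \sum_(p <- a) p.1 * wsign F p.2 * Phi (sort leq p.2) =
  \sum_(t <- X) Ecoef a t * Phi t.
Proof.
move=> HX Ha.
transitivity (\sum_(t <- X) \sum_(p <- a)
   p.1 * wsign F p.2 * (sort leq p.2 == t)%:R * Phi t); last first.
  by apply: eq_bigr => t _; rewrite /Ecoef big_distrl.
rewrite exchange_big /=; apply: eq_big_seq => p Hp.
under eq_bigr do rewrite -mulrA.
by rewrite -big_distrr /= sum_pick // Ha.
Qed.

Lemma Ecoef_mul_l a b s : Ecoef (Emul a b) s =
  \sum_(p <- a) p.1 * wsign F p.2 * Ecoef (Emul [:: (1, sort leq p.2)] b) s.
Proof.
rewrite Ecoef_mul; apply: eq_bigr => p _.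
rewrite Ecoef_mul big_cons big_nil addr0 big_distrr; apply: eq_bigr => q _ /=.
rewrite wsign_cat_l -sort_cat_l; ring.
Qed.

Lemma Ecoef_mul_r a b s : Ecoef (Emul a b) s =
  \sum_(q <- b) q.1 * wsign F q.2 * Ecoef (Emul a [:: (1, sort leq q.2)]) s.
Proof.
rewrite Ecoef_mul exchange_big; apply: eq_bigr => q _.
rewrite Ecoef_mul big_distrr; apply: eq_bigr => p _ /=.
rewrite big_cons big_nil addr0 /=.
rewrite wsign_cat_r -sort_cat_r; ring.
Qed.

Lemma EmulCl a a' b : (forall t, Ecoef a t = Ecoef a' t) ->
  forall s, Ecoef (Emul a b) s = Ecoef (Emul a' b) s.
Proof.
move=> H s; rewrite !Ecoef_mul_l.
set X := undup [seq sort leq p.2 | p <- a ++ a'].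
have HX : uniq X by exact: undup_uniq.
rewrite (lemX (fun t => Ecoef (Emul [:: (1, t)] b) s) HX); last first.
  by move=> p Hp; rewrite mem_undup; apply/mapP; exists p; rewrite ?mem_cat ?Hp.
rewrite (lemX (fun t => Ecoef (Emul [:: (1, t)] b) s) HX); last first.
  by move=> p Hp; rewrite mem_undup; apply/mapP; exists p; rewrite ?mem_cat ?Hp ?orbT.
by apply: eq_bigr => t _; rewrite H.
Qed.

Lemma EmulCr a b b' : (forall t, Ecoef b t = Ecoef b' t) ->
  forall s, Ecoef (Emul a b) s = Ecoef (Emul a b') s.
Proof.
move=> H s; rewrite !Ecoef_mul_r.
set X := undup [seq sort leq p.2 | p <- b ++ b'].
have HX : uniq X by exact: undup_uniq.
rewrite (lemX (fun t => Ecoef (Emul a [:: (1, t)]) s) HX); last first.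
  by move=> p Hp; rewrite mem_undup; apply/mapP; exists p; rewrite ?mem_cat ?Hp.
rewrite (lemX (fun t => Ecoef (Emul a [:: (1, t)]) s) HX); last first.
  by move=> p Hp; rewrite mem_undup; apply/mapP; exists p; rewrite ?mem_cat ?Hp ?orbT.
by apply: eq_bigr => t _; rewrite H.
Qed.

End E.

Section D.
Variable F : fieldType.
Implicit Types a b c x y : Eexpr F.

Lemma EmulDl a b c s : Ecoef (Emul (a ++ b) c) s = Ecoef (Emul a c) s + Ecoef (Emul b c) s.
Proof. by rewrite !Ecoef_mul big_cat. Qed.

Lemma EmulDr a b c s : Ecoef (Emul a (b ++ c)) s = Ecoef (Emul a b) s + Ecoef (Emul a c) s.
Proof. by rewrite !Ecoef_mul -big_split; apply: eq_bigr => p _; rewrite big_cat. Qed.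

Lemma EmulZl (z : F) a b s : Ecoef (Emul (Escale z a) b) s = z * Ecoef (Emul a b) s.
Proof.
rewrite !Ecoef_mul big_map big_distrr; apply: eq_bigr => p _ /=.
by rewrite big_distrr; apply: eq_bigr => q _ /=; rewrite !mulrA.
Qed.

Lemma EmulZr (z : F) a b s : Ecoef (Emul a (Escale z b)) s = z * Ecoef (Emul a b) s.
Proof.
rewrite !Ecoef_mul big_distrr; apply: eq_bigr => p _ /=.
rewrite big_map big_distrr; apply: eq_bigr => q _ /=; ring.
Qed.

Lemma Emul0r a s : Ecoef (Emul a [::]) s = 0.
Proof. by rewrite Ecoef_mul big1 // => p _; rewrite big_nil. Qed.

Lemma Emul0l a s : Ecoef (Emul [::] a) s = 0.
Proof. by rewrite Ecoef_mul big_nil. Qed.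

Lemma EmulA a b c s : Ecoef (Emul (Emul a b) c) s = Ecoef (Emul a (Emul b c)) s.
Proof.
rewrite !Ecoef_mul /Emul big_allpairs_dep; apply: eq_bigr => p _.
rewrite big_allpairs_dep; apply: eq_bigr => q _.
apply: eq_bigr => r _ /=; rewrite catA; ring.
Qed.

Lemma Emul1l a s : Ecoef (Emul (Eone F) a) s = Ecoef a s.
Proof.
rewrite Ecoef_mul big_cons big_nil addr0 /Ecoef; apply: eq_bigr => q _ /=; ring.
Qed.

Lemma Emul1r a s : Ecoef (Emul a (Eone F)) s = Ecoef a s.
Proof.
rewrite Ecoef_mul /Ecoef; apply: eq_bigr => q _ /=.
rewrite big_cons big_nil addr0 /= cats0; ring.
Qed.

Lemma Emul_sum a (L : seq (Eexpr F)) s :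
  Ecoef (Emul a (Esum L)) s = \sum_(y <- L) Ecoef (Emul a y) s.
Proof.
elim: L => [|y L IH]; first by rewrite big_nil /Esum /= Emul0r.
by rewrite big_cons -IH /Esum /= EmulDr.
Qed.

Definition par (bb : bool) a := filter (fun p : F * seq nat => odd (size p.2) == bb) a.
Definition pw (bb : bool) a := all (fun p : F * seq nat => odd (size p.2) == bb) a.

Lemma Ecoef_par bb a s : Ecoef (par bb a) s = if odd (size s) == bb then Ecoef a s else 0.
Proof.
rewrite /Ecoef /par big_filter big_mkcond /=.
case: ifP => Hs.
  apply: eq_bigr => p _; case: ifP => // Hp.
  case: eqP => [E|]; last by rewrite mulr0.
  by move: Hp; rewrite -(size_sort leq) E Hs.
apply: big1 => p _; case: ifP => // Hp.
case: eqP => [E|]; last by rewrite mulr0.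
by move: Hp; rewrite -(size_sort leq) E Hs.
Qed.

Lemma par_split a s : Ecoef a s = Ecoef (par false a) s + Ecoef (par true a) s.
Proof. by rewrite !Ecoef_par; case: (odd (size s)); rewrite /= ?addr0 ?add0r. Qed.

Lemma pw_par bb a : pw bb (par bb a).
Proof. by rewrite /pw /par; apply/allP => p; rewrite mem_filter => /andP []. Qed.

Lemma pw_mul (e1 e2 : bool) a b : pw e1 a -> pw e2 b -> pw (e1 (+) e2) (Emul a b).
Proof.
move=> /allP Ha /allP Hb; apply/allP => x /allpairsPdep [p [q [Hp Hq ->]]] /=.
by rewrite size_cat oddD (eqP (Ha p Hp)) (eqP (Hb q Hq)).
Qed.

Lemma pw_scale bb (z : F) a : pw bb a -> pw bb (Escale z a).
Proof. by rewrite /pw /Escale all_map. Qed.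

Lemma Emul_comm (e1 e2 : bool) a b s : pw e1 a -> pw e2 b ->
  Ecoef (Emul a b) s = (-1) ^+ (e1 && e2) * Ecoef (Emul b a) s.
Proof.
move=> /allP Ha /allP Hb.
rewrite !Ecoef_mul exchange_big big_distrr; apply: eq_big_seq => q Hq.
rewrite big_distrr; apply: eq_big_seq => p Hp /=.
rewrite wsign_catC sort_catC -signr_odd oddM (eqP (Ha p Hp)) (eqP (Hb q Hq)).
rewrite [e2 && e1]andbC; case: (e1 && e2) => /=; ring.
Qed.

End D.

Section EE.
Variable F : fieldType.
Implicit Types a b c x y : Eexpr F.

Lemma splitE a t : Ecoef a t = Ecoef (par false a ++ par true a) t.
Proof. by rewrite Ecoef_cat -par_split. Qed.

Lemma Ecomm_od a b s :
  Ecoef (Ecomm a b) s = 2 * Ecoef (Emul (par true a) (par true b)) s.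
Proof.
rewrite Ecoef_comm (EmulCl _ (splitE a)) (EmulCr _ (splitE b)).
rewrite (EmulCl _ (splitE b)) (EmulCr _ (splitE a)).
rewrite !EmulDl !EmulDr.
rewrite (Emul_comm s (pw_par false b) (pw_par false a)).
rewrite (Emul_comm s (pw_par false b) (pw_par true a)).
rewrite (Emul_comm s (pw_par true b) (pw_par false a)).
rewrite (Emul_comm s (pw_par true b) (pw_par true a)) /=.
ring.
Qed.

Lemma Ecomm_eq a b s :
  Ecoef (Ecomm a b) s = Ecoef (Escale 2 (Emul (par true a) (par true b))) s.
Proof. by rewrite Ecomm_od Ecoef_scale. Qed.

Lemma pw_Ecomm a b : pw false (Escale 2 (Emul (par true a) (par true b))).
Proof. by apply: pw_scale; apply: (pw_mul (pw_par true a) (pw_par true b)). Qed.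

Lemma central c x s : pw false c -> Ecoef (Emul c x) s = Ecoef (Emul x c) s.
Proof.
move=> Hc.
rewrite (EmulCr _ (splitE x)) (EmulCl _ (splitE x)) EmulDl EmulDr.
rewrite (Emul_comm s Hc (pw_par false x)) (Emul_comm s Hc (pw_par true x)) /=.
by rewrite !mul1r.
Qed.

Lemma comm_central a b x s :
  Ecoef (Emul (Ecomm a b) x) s = Ecoef (Emul x (Ecomm a b)) s.
Proof.
rewrite (EmulCl _ (Ecomm_eq a b)) (EmulCr _ (Ecomm_eq a b)).
exact: central (pw_Ecomm a b).
Qed.

Lemma par_eq bb a a' : (forall t, Ecoef a t = Ecoef a' t) ->
  forall t, Ecoef (par bb a) t = Ecoef (par bb a') t.
Proof. by move=> H t; rewrite !Ecoef_par H. Qed.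

Variable k : nat.

Definition Pk (n : nat) a := exists a' : Eexpr F,
  (forall s, Ecoef a s = Ecoef a' s) /\
  all (fun p : F * seq nat => n <= count (fun i => i < k) p.2)%N a'.

Lemma P_eq n a b : (forall s, Ecoef a s = Ecoef b s) -> Pk n a -> Pk n b.
Proof. by move=> H [a' [H1 H2]]; exists a'; split => // s; rewrite -H. Qed.

Lemma P0 a : Pk 0 a.
Proof. by exists a; split => //; apply/allP. Qed.

Lemma P_le m n a : (m <= n)%N -> Pk n a -> Pk m a.
Proof.
move=> Hmn [a' [H1 H2]]; exists a'; split => //.
by apply/allP => p /(allP H2) /= H; apply: leq_trans H.
Qed.

Lemma P_mul n m a b : Pk n a -> Pk m b -> Pk (n + m) (Emul a b).
Proof.
move=> [a' [Ha Ha']] [b' [Hb Hb']]; exists (Emul a' b'); split.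
  by move=> s; rewrite (EmulCl _ Ha) (EmulCr _ Hb).
apply/allP => x /allpairsPdep [p [q [Hp Hq ->]]] /=.
by rewrite count_cat leq_add // ?(allP Ha' p Hp) ?(allP Hb' q Hq).
Qed.

Lemma P_cat n a b : Pk n a -> Pk n b -> Pk n (a ++ b).
Proof.
move=> [a' [Ha Ha']] [b' [Hb Hb']]; exists (a' ++ b'); split.
  by move=> s; rewrite !Ecoef_cat Ha Hb.
by rewrite all_cat Ha' Hb'.
Qed.

Lemma P_scale n (z : F) a : Pk n a -> Pk n (Escale z a).
Proof.
move=> [a' [Ha Ha']]; exists (Escale z a'); split.
  by move=> s; rewrite !Ecoef_scale Ha.
by rewrite /Escale all_map.
Qed.

Lemma P_par n bb a : Pk n a -> Pk n (par bb a).
Proof.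
move=> [a' [Ha Ha']]; exists (par bb a'); split; first exact: par_eq.
by rewrite /par all_filter; apply/allP => p Hp; apply/implyP => _; apply: (allP Ha').
Qed.

Lemma P_nil n : Pk n [::].
Proof. by exists [::]; split. Qed.

Lemma count_lt_uniq (w : seq nat) : uniq w -> (count (fun i => i < k) w <= k)%N.
Proof.
move=> Hw; rewrite -size_filter.
rewrite -[X in (_ <= X)%N](size_iota 0 k).
apply: uniq_leq_size; first exact: filter_uniq.
by move=> i; rewrite mem_filter mem_iota add0n leq0n /= => /andP [].
Qed.

Lemma P_zero a : Pk k.+1 a -> Ezero a.
Proof.
move=> [a' [Ha Ha']] s; rewrite Ha /Ecoef big1_seq // => p /andP [_ Hp].
have H := allP Ha' p Hp; rewrite /= in H.
rewrite /wsign; case: ifP => Hu; last by rewrite !mulr0 mul0r.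
by have := count_lt_uniq Hu; rewrite leqNgt H.
Qed.

Lemma P_sem n a : (forall s, Ecoef a s != 0 -> (n <= count (fun i => i < k) s)%N) -> Pk n a.
Proof.
move=> H.
set X := undup [seq sort leq p.2 | p <- a].
exists [seq (Ecoef a t, t) | t <- X & Ecoef a t != 0]; split; last first.
  by rewrite all_map; apply/allP => t; rewrite mem_filter => /andP [/H].
move=> s.
have HX : uniq X by exact: undup_uniq.
have E1 : Ecoef a s = \sum_(t <- X) Ecoef a t * (t == s)%:R.
  rewrite -(lemX (fun t => (t == s)%:R) HX); last first.
    by move=> p Hp; rewrite mem_undup; apply/mapP; exists p.
  by [].
have E2 : Ecoef [seq (Ecoef a t, t) | t <- X & Ecoef a t != 0] s =
   \sum_(t <- X | Ecoef a t != 0) Ecoef a t * wsign F t * (sort leq t == s)%:R.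
  by rewrite [LHS]/Ecoef big_map big_filter.
rewrite E1 E2 [RHS]big_mkcond /=.
apply: eq_big_seq => t; rewrite mem_undup => /mapP [p Hp ->].
set u := sort leq p.2.
case: (eqVneq (Ecoef a u) 0) => [E|Hne] /=; first by rewrite E mul0r.
rewrite /u (@sorted_sort _ leq leq_trans (sort leq p.2)); last by apply: sort_sorted; exact: leq_total.
rewrite wsign_sort.
case Hu: (uniq p.2); first by rewrite mulr1.
exfalso; move/eqP: Hne; apply.
rewrite /Ecoef big1 // => q _.
case: eqP => [Eq|]; last by rewrite mulr0.
rewrite /wsign (_ : uniq q.2 = false) ?mulr0 ?mul0r //.
by rewrite -(sort_uniq leq) Eq /u sort_uniq Hu.
Qed.

End EE.

Fixpoint allbits (n : nat) : seq bitseq :=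
  if n is n'.+1 then [seq true :: b | b <- allbits n'] ++ [seq false :: b | b <- allbits n']
  else [:: [::]].

Section G.
Variable F : fieldType.
Variable z : nat -> Eexpr F.
Implicit Types a c y : Eexpr F.

Definition cf (n : nat) : F := ((-2 : F) ^+ (n %/ 2))^-1.

Definition fl (l : seq nat) (b : bitseq) : Eexpr F :=
  Emul (Eprod (map z (mask (map negb b) l)))
       (Eprod [seq Ecomm (z p.1) (z p.2) | p <- pairup (mask b l)]).

Definition fp (j : nat) (l : seq nat) (b : bitseq) : Eexpr F :=
  Emul (Eprod (map z (mask (map negb b) l)))
       (Eprod [seq Ecomm (z p.1) (z p.2) | p <- pairup (j :: mask b l)]).

Definition Gsum (l : seq nat) : Eexpr F :=
  Esum [seq Escale (cf (count id b)) (fl l b) | b <- allbits (size l) & ~~ odd (count id b)].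

Definition Psum (j : nat) (l : seq nat) : Eexpr F :=
  Esum [seq Escale (cf (count id b).+1) (fp j l b) | b <- allbits (size l) & odd (count id b)].

Lemma Ecoef_sumF (L : seq bitseq) (P : pred bitseq) (Fn : bitseq -> Eexpr F) s :
  Ecoef (Esum [seq Fn b | b <- L & P b]) s = \sum_(b <- L | P b) Ecoef (Fn b) s.
Proof. by rewrite Ecoef_sum big_map big_filter. Qed.

Lemma cfSS n : cf n.+2 = cf n * (-2)^-1.
Proof.
have E : (n.+2 %/ 2 = (n %/ 2).+1)%N by lia.
by rewrite /cf E exprS invfM mulrC.
Qed.

Lemma cnt_true b : count id (true :: b) = (count id b).+1.
Proof. by []. Qed.

Lemma cnt_false b : count id (false :: b) = count id b.
Proof. by []. Qed.

Lemma Gsum_cons x l s :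
  Ecoef (Gsum (x :: l)) s = Ecoef (Emul (z x) (Gsum l)) s + Ecoef (Psum x l) s.
Proof.
rewrite /Gsum /Psum /= Ecoef_sumF big_cat !big_map /= addrC; congr (_ + _).
  rewrite Emul_sum big_map big_filter; apply: eq_big => b; first by rewrite add0n.
  move=> _; rewrite !Ecoef_scale add0n EmulZr; congr (_ * _).
  by rewrite /fl /= EmulA.
rewrite Ecoef_sumF; apply: eq_big => b; first by rewrite add0n negbK.
by move=> _; rewrite add1n.
Qed.

Lemma Psum_cons j x l s :
  Ecoef (Psum j (x :: l)) s = Ecoef (Emul (z x) (Psum j l)) s +
    (-2)^-1 * Ecoef (Emul (Ecomm (z j) (z x)) (Gsum l)) s.
Proof.
rewrite /Gsum /Psum /= Ecoef_sumF big_cat !big_map /= addrC; congr (_ + _).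
  rewrite Emul_sum big_map big_filter; apply: eq_big => b; first by rewrite add0n.
  move=> _; rewrite !Ecoef_scale add0n EmulZr; congr (_ * _).
  by rewrite /fp /= EmulA.
rewrite Emul_sum big_map big_filter big_distrr; apply: eq_big => b.
  by rewrite add0n.
move=> _; rewrite !Ecoef_scale add1n EmulZr cfSS.
rewrite /fp /= -EmulA (EmulCl _ (fun t => esym (comm_central _ _ _ t))) EmulA.
by rewrite /fl; ring.
Qed.

End G.

Section H.
Variable F : fieldType.
Implicit Types a b c : Eexpr F.

Lemma swap_even a b c s : pw false a ->
  Ecoef (Emul a (Emul b c)) s = Ecoef (Emul b (Emul a c)) s.
Proof.
move=> Ha; rewrite -EmulA (EmulCl _ (fun t => central b t Ha)) EmulA //.
Qed.

Lemma swap_odd a b c s : pw true a -> pw true b ->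
  Ecoef (Emul a (Emul b c)) s = - Ecoef (Emul b (Emul a c)) s.
Proof.
move=> Ha Hb; rewrite -EmulA.
have H : forall t, Ecoef (Emul a b) t = Ecoef (Escale (-1) (Emul b a)) t.
  by move=> t; rewrite Ecoef_scale (Emul_comm t Ha Hb) expr1.
by rewrite (EmulCl _ H) EmulZl EmulA mulN1r.
Qed.

Variable z : nat -> Eexpr F.

Definition Epr (l : seq nat) := Eprod (map (fun i => par false (z i)) l).

Fixpoint Kf (l : seq nat) : Eexpr F :=
  if l is x :: l' then Emul (par false (z x)) (Kf l') ++ Emul (par true (z x)) (Epr l')
  else [::].

Hypothesis H2 : (2 : F) != 0.

Lemma Ginv l :
  (forall s, Ecoef (Gsum z l) s = Ecoef (Epr l) s + Ecoef (Kf l) s) /\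
  (forall j s, Ecoef (Psum z j l) s = - Ecoef (Emul (par true (z j)) (Kf l)) s).
Proof.
elim: l => [|x l [IHG IHP]].
  split => [s|j s].
    by rewrite /Gsum /= /cf expr0 invr1 !mul1r Ecoef_nil addr0.

  by rewrite /Psum /= Ecoef_nil Emul0r oppr0.
have IHG' : forall t, Ecoef (Gsum z l) t = Ecoef (Epr l ++ Kf l) t.
  by move=> t; rewrite Ecoef_cat IHG.
have IHP' : forall j t, Ecoef (Psum z j l) t =
    Ecoef (Escale (-1) (Emul (par true (z j)) (Kf l))) t.
  by move=> j t; rewrite Ecoef_scale IHP mulN1r.
split => [s|j s].
  rewrite Gsum_cons (EmulCr _ IHG') EmulDr IHP.
  rewrite (EmulCl _ (splitE (z x))) EmulDl.
  rewrite (EmulCl _ (splitE (z x))) EmulDl.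
  rewrite /Epr /= -/(Epr l) Ecoef_cat.
  ring.
rewrite Psum_cons (EmulCr _ (IHP' j)) EmulZr.
rewrite (EmulCl _ (splitE (z x))) EmulDl.
rewrite (swap_even _ _ _ (pw_par false (z x))).
rewrite (swap_odd _ _ (pw_par true (z x)) (pw_par true (z j))).
rewrite (EmulCl _ (Ecomm_eq (z j) (z x))) EmulZl EmulA.
have H1 : forall t, Ecoef (Emul (par true (z x)) (Gsum z l)) t =
   Ecoef (Emul (par true (z x)) (Epr l) ++ Emul (par true (z x)) (Kf l)) t.
  by move=> t; rewrite Ecoef_cat -EmulDr (EmulCr _ IHG').
rewrite (EmulCr _ H1) EmulDr /= EmulDr mulrA.
have -> : (-2 : F)^-1 * 2 = -1 by rewrite invrN mulNr mulVf.
ring.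
Qed.

Lemma P_Epr k l : (forall i, Pk k 1 (par false (z i))) -> Pk k (size l) (Epr l).
Proof.
move=> Hz; elim: l => [|x l IH] /=; first exact: P0.
by rewrite -add1n; apply: P_mul.
Qed.

Lemma P_Kf k l : (forall i, Pk k 1 (par false (z i))) -> Pk k (size l).-1 (Kf l).
Proof.
move=> Hz; elim: l => [|x l IH] /=; first exact: P_nil.
apply: P_cat.
  by apply: (P_le _ (P_mul (Hz x) IH)); case: (size l).
by rewrite -(add0n (size l)); apply: P_mul; [exact: P0 | exact: P_Epr].
Qed.

Lemma P_Gsum k l : (forall i, Pk k 1 (par false (z i))) -> Pk k (size l).-1 (Gsum z l).
Proof.
move=> Hz; have [HG _] := Ginv l.
apply: (@P_eq _ _ _ (Epr l ++ Kf l)); first by move=> s; rewrite Ecoef_cat HG.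
apply: P_cat; last exact: P_Kf.
by apply: (P_le _ (P_Epr l Hz)); apply: leq_pred.
Qed.

End H.

Lemma consI (x : bool) : injective (cons x).
Proof. by move=> u v []. Qed.

Lemma allbits_mem n b : (b \in allbits n) = (size b == n).
Proof.
elim: n b => [|n IH] b /=; first by rewrite inE; case: b.
have N : forall (x y : bool) c, x != y -> (x :: c \in [seq y :: d | d <- allbits n]) = false.
  by move=> x y c Hxy; apply/mapP => [[d _ [E _]]]; rewrite E eqxx in Hxy.
rewrite mem_cat; case: b => [|x b] /=.
  by apply/negP => /orP [] /mapP [? _].
rewrite eqSS -IH; case: x.
  by rewrite (mem_map (@consI true)) N ?orbF.
by rewrite (mem_map (@consI false)) N.
Qed.

Lemma allbits_uniq n : uniq (allbits n).
Proof.
elim: n => [|n IH] //=.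
rewrite cat_uniq (map_inj_uniq (@consI true)) (map_inj_uniq (@consI false)) IH /= andbT.
apply/hasPn => b /mapP [c _ ->]; apply/mapP => [[d _ E]]; discriminate E.
Qed.

Definition bits m (T : {set 'I_m}) : bitseq := [seq i \in T | i <- enum 'I_m].

Lemma bits_nth m (T : {set 'I_m}) (i : 'I_m) : nth false (bits T) i = (i \in T).
Proof. by rewrite /bits (nth_map i) ?size_enum_ord // nth_ord_enum. Qed.

Lemma bits_inj m : injective (@bits m).
Proof. by move=> T1 T2 E; apply/setP => i; rewrite -!bits_nth E. Qed.

Lemma bits_size m (T : {set 'I_m}) : size (bits T) = m.
Proof. by rewrite /bits size_map size_enum_ord. Qed.

Lemma bits_surj m b : size b = m -> bits [set i : 'I_m | nth false b i] = b.
Proof.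
move=> Hb; rewrite /bits.
rewrite (eq_map (g := fun i : 'I_m => nth false b i)); last by move=> i; rewrite inE.
by rewrite (map_comp (nth false b) val) val_enum_ord -Hb -/(mkseq _ _) mkseq_nth.
Qed.

Lemma bits_card m (T : {set 'I_m}) : #|T| = count id (bits T).
Proof.
rewrite /bits count_map cardE -size_filter /enum_mem; congr size.
rewrite (@eq_filter _ (mem 'I_m) predT) // filter_predT.
by apply: eq_filter.
Qed.

Lemma reindex (R : Type) (idx : R) (op : Monoid.com_law idx) m (psi : bitseq -> R) :
  \big[op/idx]_(T <- enum [set: {set 'I_m}]) psi (bits T) =
  \big[op/idx]_(b <- allbits m) psi b.
Proof.
rewrite -(big_map (@bits m) xpredT); apply: perm_big.
apply: uniq_perm; first by rewrite map_inj_uniq ?enum_uniq //; exact: bits_inj.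
  exact: allbits_uniq.
move=> b; rewrite allbits_mem; apply/mapP/eqP => [[T _ ->]|Hb].
  exact: bits_size.
by exists [set i : 'I_m | nth false b i]; rewrite ?bits_surj // mem_enum inE.
Qed.

Section I.
Variable F : fieldType.
Variable z : nat -> Eexpr F.

Lemma fT_fl m (T : {set 'I_m}) : fT T z = fl z (iota 0 m) (bits T).
Proof.
rewrite /fT /fl /bits !filter_mask !map_mask val_enum_ord -map_comp.
by [].
Qed.

Lemma gpoly_Gsum m s : m != 1%N -> Ecoef (gpoly m z) s = Ecoef (Gsum z (iota 0 m)) s.
Proof.
move=> Hm; rewrite /gpoly (negbTE Hm) Ecoef_sum big_map big_filter.
rewrite /Gsum size_iota Ecoef_sumF big_mkcond [RHS]big_mkcond.
rewrite -(reindex _ m (fun b => if ~~ odd (count id b)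
   then Ecoef (Escale (cf F (count id b)) (fl z (iota 0 m) b)) s else 0)).
by apply: eq_bigr => T _; rewrite -bits_card fT_fl.
Qed.

End I.

Section J.
Variable F : fieldType.
Variable k : nat.

Lemma par_P1 (d : nat) (a : Eexpr F) (bb : bool) :
  Ehomog k d%:Z a -> odd d != bb -> Pk k 1 (par bb a).
Proof.
move=> Ha Hd; apply: P_sem => s; rewrite Ecoef_par.
case: ifP => Hs; last by rewrite eqxx.
move=> /Ha /eqP; rewrite eqz_nat => /eqP Em.
have C := count_predC (fun i => (i < k)%N) s.
have E2 : count (predC (fun i => (i < k)%N)) s = mdeg k s.
  by rewrite /mdeg; apply: eq_count => i /=; rewrite -leqNgt.
rewrite E2 Em in C.
rewrite lt0n; apply/negP => /eqP E0.
by rewrite E0 add0n in C; move: Hd; rewrite C (eqP Hs) eqxx.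
Qed.

Lemma P_Ecomm n m (a b : Eexpr F) :
  Pk k n (par true a) -> Pk k m (par true b) -> Pk k (n + m) (Ecomm a b).
Proof.
move=> Ha Hb.
apply: (P_eq (fun s => esym (Ecomm_eq a b s))).
by apply: P_scale; apply: P_mul.
Qed.

Lemma P_cp (v : nat -> Eexpr F) n :
  (forall i, Pk k 1 (par true (v i))) -> Pk k (2 * n) (comm_prod v n).
Proof.
move=> Hv.
suff H : forall L, Pk k (2 * size L) (Eprod [seq Ecomm (v (2 * i)%N) (v (2 * i).+1) | i <- L]).
  by rewrite /comm_prod -{1}(size_iota 0 n); apply: H.
elim => [|i L IH] /=; first exact: P0.
rewrite mulnS; apply: P_mul; last exact: IH.
exact: (P_Ecomm (Hv _) (Hv _)).
Qed.

Lemma P_gpoly (z : nat -> Eexpr F) m : (2 : F) != 0 ->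
  (forall i, Pk k 1 (par false (z i))) -> Pk k m.-1 (gpoly m z).
Proof.
move=> H2 Hz; case: (eqVneq m 1%N) => [->|Hm]; first exact: P0.
apply: (P_eq (fun s => esym (gpoly_Gsum z s Hm))).
by rewrite -{1}(size_iota 0 m); apply: P_Gsum.
Qed.

End J.

Theorem mainTheorem13 (F : fieldType) (k : nat) :
  [pchar F] =i pred0 -> (0 < k)%N ->
  (* (1) x with alpha(x) < 0 *)
  (forall (d : int) (a : Eexpr F), d < 0 -> Ehomog k d a -> Ezero a) /\
  (* (2) [x1,x2,x3] for all degrees *)
  (forall (d1 d2 d3 : int) (a1 a2 a3 : Eexpr F),
      Ehomog k d1 a1 -> Ehomog k d2 a2 -> Ehomog k d3 a3 ->
      Ezero (Ecomm (Ecomm a1 a2) a3)) /\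
  (* (3) k even: [y1,y2]...[y_(k-1),y_k][y_(k+1),x] *)
  (~~ odd k -> forall (y : nat -> Eexpr F) (d : int) (x : Eexpr F),
      (forall i, Ehomog k 0 (y i)) -> Ehomog k d x ->
      Ezero (Emul (comm_prod y k./2) (Ecomm (y k) x))) /\
  (* (4) k odd: [y1,y2]...[y_k,y_(k+1)] *)
  (odd k -> forall (y : nat -> Eexpr F),
      (forall i, Ehomog k 0 (y i)) ->
      Ezero (comm_prod y k.+1./2)) /\
  (* (5) even l <= k *)
  (forall (l : nat), ~~ odd l -> (l <= k)%N ->
   forall (dz du : nat -> nat) (z u : nat -> Eexpr F),
      (forall i, odd (dz i)) -> (forall i, ~~ odd (du i)) ->
      (forall i, Ehomog k (dz i)%:Z (z i)) -> (forall i, Ehomog k (du i)%:Z (u i)) ->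
      Ezero (Emul (gpoly (k - l + 2) z) (comm_prod u l./2))) /\
  (* (6) odd l <= k *)
  (forall (l : nat), odd l -> (l <= k)%N ->
   forall (dz du : nat -> nat) (z u : nat -> Eexpr F),
      (forall i, odd (dz i)) -> (forall i, ~~ odd (du i)) ->
      (forall i, Ehomog k (dz i)%:Z (z i)) -> (forall i, Ehomog k (du i)%:Z (u i)) ->
      Ezero (Emul (Ecomm (gpoly (k - l + 2) z) (u 0%N))
                  (comm_prod (fun i => u i.+1) l./2))) /\
  (* (7) odd l <= k *)
  (forall (l : nat), odd l -> (l <= k)%N ->
   forall (dz du : nat -> nat) (z u : nat -> Eexpr F),
      (forall i, odd (dz i)) -> (forall i, ~~ odd (du i)) ->
      (forall i, Ehomog k (dz i)%:Z (z i)) -> (forall i, Ehomog k (du i)%:Z (u i)) ->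
      Ezero (Emul (Emul (gpoly (k - l + 2) z) (Ecomm (z (k - l + 2)%N) (u 0%N)))
                  (comm_prod (fun i => u i.+1) l./2))).
Proof.
move=> Hchar Hk0.
have H2 : (2 : F) != 0.
  by rewrite (proj1 (pcharf0P F) Hchar 2).
split.
  move=> d a Hd Ha s.
  case: (eqVneq (Ecoef a s) 0) => // /Ha E.
  by rewrite -E in Hd.
split.
  move=> d1 d2 d3 a1 a2 a3 _ _ _ s.
  rewrite Ecoef_comm (EmulCl _ (Ecomm_eq a1 a2)) (EmulCr _ (Ecomm_eq a1 a2)).
  by rewrite (central _ _ (pw_Ecomm a1 a2)) subrr.
split.
  move=> Hk y d x Hy Hx; apply: P_zero.
  have Hy' : forall i, Pk k 1 (par true (y i)).
    by move=> i; apply: (par_P1 (d := 0) (Hy i)).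
  apply: (P_le _ (P_mul (P_cp k./2 Hy') (P_Ecomm (Hy' k) (P0 k _)))).
  have := odd_double_half k; rewrite (negbTE Hk) add0n -muln2; lia.
split.
  move=> Hk y Hy; apply: P_zero.
  have Hy' : forall i, Pk k 1 (par true (y i)).
    by move=> i; apply: (par_P1 (d := 0) (Hy i)).
  apply: (P_le _ (P_cp k.+1./2 Hy')).
  have := odd_double_half k.+1; rewrite /= Hk /= add0n -muln2; lia.
have Hzz : forall (dz : nat -> nat) (z : nat -> Eexpr F), (forall i, odd (dz i)) ->
   (forall i, Ehomog k (dz i)%:Z (z i)) -> forall i, Pk k 1 (par false (z i)).
  by move=> dz z Hdz Hz i; apply: (par_P1 (Hz i)); rewrite Hdz.
have Huu : forall (du : nat -> nat) (u : nat -> Eexpr F), (forall i, ~~ odd (du i)) ->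
   (forall i, Ehomog k (du i)%:Z (u i)) -> forall i, Pk k 1 (par true (u i)).
  by move=> du u Hdu Hu i; apply: (par_P1 (Hu i)); rewrite (negbTE (Hdu i)).
split.
  move=> l Hl Hlk dz du z u Hdz Hdu Hz Hu; apply: P_zero.
  have Pg := P_gpoly (k - l + 2) H2 (Hzz _ _ Hdz Hz).
  apply: (P_le _ (P_mul Pg (P_cp l./2 (Huu _ _ Hdu Hu)))).
  have := odd_double_half l; rewrite (negbTE Hl) add0n -muln2; lia.
split.
  move=> l Hl Hlk dz du z u Hdz Hdu Hz Hu; apply: P_zero.
  have Pg := P_par true (P_gpoly (k - l + 2) H2 (Hzz _ _ Hdz Hz)).
  have Hu' := Huu _ _ Hdu Hu.
  apply: (P_le _ (P_mul (P_Ecomm Pg (Hu' 0%N)) (P_cp l./2 (fun i => Hu' i.+1)))).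
  have := odd_double_half l; rewrite Hl -muln2; lia.
move=> l Hl Hlk dz du z u Hdz Hdu Hz Hu; apply: P_zero.
have Pg := P_gpoly (k - l + 2) H2 (Hzz _ _ Hdz Hz).
have Hu' := Huu _ _ Hdu Hu.
apply: (P_le _ (P_mul (P_mul Pg (P_Ecomm (P0 k _) (Hu' 0%N)))
                      (P_cp l./2 (fun i => Hu' i.+1)))).
have := odd_double_half l; rewrite Hl -muln2; lia.
Qed.
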